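(* Let $k\ge1$ and $0\le r<k$ be integers. Then for every $n\ge1$, $$\sum_{j=0}^n(-1)^j\binom{r+1}{j}F^{(k)}_{k(n-j)+r}(x)=x^{r+1}F^{(k)}_{kn-1}(x),$$ and for every $n\ge1$ and every integer $i$ with $0<i<k+n$, $$\sum_{j=0}^{n-1}(-1)^{n-1-j}\binom{i-k+r}{n-1-j}x^kF^{(k)}_{kj+r}(x)=x^{r+i}F^{(k)}_{kn-i}(x).$$
   Context: Binomial coefficients are the generalized ones: for an integer $m$ (possibly negative) and an integer $j$, $\binom{m}{j}=\frac{m(m-1)\cdots(m-j+1)}{j!}$ if $j\ge 0$ and $\binom{m}{j}=0$ if $j<0$. For an integer $k\ge1$, the generalized Fibonacci polynomials $F^{(k)}_n(x)\in\mathbb{Z}[x]$ ($n\ge0$) are defined by $F^{(k)}_n(x)=x^n$ for $0\le n<k$ and $F^{(k)}_n(x)=xF^{(k)}_{n-1}(x)+F^{(k)}_{n-k}(x)$ for $n\ge k$. *)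

(* Defs.v *)
From HB Require Import structures.
From mathcomp Require Import all_boot all_order all_algebra.
Set Implicit Arguments. Unset Strict Implicit. Unset Printing Implicit Defensive.
Import Order.TTheory GRing.Theory Num.Theory.
Local Open Scope ring_scope.

(* The division is exact; we use
   integer division divz. (For j < 0 the paper sets it to 0; only j >= 0
   occurs in the statement.) *)
Definition genbin (m : int) (j : nat) : int :=
  ((\prod_(t < j) (m - t%:Z)) %/ (j`!)%:Z)%Z.

Fixpoint Faux (k fuel n : nat) : {poly int} :=
  match fuel with
  | 0 => 0
  | fuel'.+1 =>
      if (n < k)%N then 'X^n
      else 'X * Faux k fuel' n.-1 + Faux k fuel' (n - k)%N
  end.

Definition Fib (k n : nat) : {poly int} := Faux k n.+1 n.

(* Main.v *)
Require Import Defs.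
From HB Require Import structures.
From mathcomp Require Import all_boot all_order all_algebra.
From mathcomp Require Import ring lra zify.
Import Order.TTheory GRing.Theory Num.Theory.
Local Open Scope ring_scope.

Definition DD (m : int) (j : nat) : int := \prod_(t < j) (m - t%:Z).

Lemma DD_rec m j : DD m j.+1 = DD (m-1) j.+1 + (j.+1)%:Z * DD (m-1) j.
Proof.
rewrite /DD big_ord_recl big_ord_recr /=.
rewrite (eq_bigr (fun t : 'I_j => m - 1 - t%:Z)); last first.
  by move=> t _; rewrite /bump /= add1n intS; ring.
set P := \prod_(i < j) _. ring.
Qed.

Lemma DD_dvd j m : ((j`!)%:Z %| DD m j)%Z.
Proof.
elim: j m => [|j IH] m.
  by rewrite /DD big_ord0 fact0 dvdz1.
have key : forall m, ((j.+1`!)%:Z %| DD m j.+1)%Z = ((j.+1`!)%:Z %| DD (m-1) j.+1)%Z.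
  move=> m'; rewrite DD_rec; apply/idP/idP => H.
  - have H2 : ((j.+1`!)%:Z %| (j.+1)%:Z * DD (m'-1) j)%Z.
      by rewrite factS PoszM; apply: dvdz_mul.
    by have := rpredB H H2; rewrite addrK.
  - apply: rpredD => //.
    by rewrite factS PoszM; apply: dvdz_mul.
elim/int_ind: m.
- by rewrite /DD big_ord_recl /= subr0 mul0r dvdz0.
- move=> n Hn; by rewrite key -addn1 PoszD addrK.
- move=> n Hn; by rewrite -addn1 PoszD opprD -key.
Qed.

Lemma genbinE m j : genbin m j * (j`!)%:Z = DD m j.
Proof. by rewrite /genbin divzK // DD_dvd. Qed.

Lemma genbin0 m : genbin m 0 = 1.
Proof. by apply: (mulIf (x := (0`!)%:Z)) => //; rewrite genbinE /DD big_ord0 mul1r. Qed.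

Lemma genbin0S j : genbin 0 j.+1 = 0.
Proof.
apply: (mulIf (x := (j.+1`!)%:Z)); first by rewrite eqz_nat -lt0n fact_gt0.
by rewrite genbinE mul0r /DD big_ord_recl /= subr0 mul0r.
Qed.

Lemma genbinS m j : genbin m j.+1 = genbin (m-1) j.+1 + genbin (m-1) j.
Proof.
apply: (mulIf (x := (j.+1`!)%:Z)); first by rewrite eqz_nat -lt0n fact_gt0.
rewrite mulrDl !genbinE DD_rec -(genbinE (m-1) j) factS PoszM.
ring. Qed.
Lemma Faux_stable k (hk : (1 <= k)%N) f1 f2 n :
  (n < f1)%N -> (n < f2)%N -> Faux k f1 n = Faux k f2 n.
Proof.
elim: f1 f2 n => [|f1 IH] [|f2] n //= h1 h2.
case: ifP => // hn.
rewrite (IH f2) ?(IH f2 (n - k)%N) //; lia.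
Qed.

Lemma Fib_small k n : (n < k)%N -> Fib k n = 'X^n.
Proof. by move=> h; rewrite /Fib /= h. Qed.

Lemma Fib_rec k n : (1 <= k)%N -> (k <= n)%N ->
  Fib k n = 'X * Fib k n.-1 + Fib k (n - k)%N.
Proof.
move=> hk h; rewrite /Fib /= ltnNge h /=.
rewrite (Faux_stable k hk n n.-1.+1 n.-1) ?(Faux_stable k hk n (n-k).+1 (n-k)) //; lia.
Qed.

Section Main.
Variables (k r : nat).
Hypothesis hk : (1 <= k)%N.
Hypothesis hr : (r < k)%N.

Definition U (s : int) (n : nat) : {poly int} :=
  \sum_(j < n.+1) ((-1) ^+ j * genbin s j)%:P * Fib k (k * (n - j) + r)%N.

Lemma Urec s n : U s n.+1 = Fib k (k * n.+1 + r)%N +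
  \sum_(i < n.+1) ((-1) ^+ i.+1 * genbin s i.+1)%:P * Fib k (k * (n - i) + r)%N.
Proof.
rewrite /U big_ord_recl genbin0 expr0 mulr1 polyC1 mul1r subn0; congr (_ + _).
Qed.

Lemma U_pascal s n : U s n.+1 = U (s - 1) n.+1 - U (s - 1) n.
Proof.
rewrite !Urec.
rewrite (eq_bigr (fun i : 'I_n.+1 =>
   ((-1) ^+ i.+1 * genbin (s-1) i.+1)%:P * Fib k (k * (n - i) + r)
   - ((-1) ^+ i * genbin (s-1) i)%:P * Fib k (k * (n - i) + r))).
  by rewrite sumrB /U; ring.
move=> i _; rewrite genbinS exprS !polyCM polyCD polyCN polyC1.
ring.
Qed.

Lemma part1 s : (s <= r.+1)%N -> forall n, (1 <= n)%N || (s <= r)%N ->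
  U s%:Z n = 'X^s * Fib k (k * n + r - s)%N.
Proof.
elim: s => [|s IH] hs n hn.
  rewrite /U big_ord_recl genbin0 big1 ?addr0 ?expr0 ?mul1r ?mulr1 ?subn0 ?subn0 ?polyC1 ?mul1r //.
  by move=> i _; rewrite genbin0S mulr0 polyC0 mul0r.
case: n hn => [|m] hn.
  have hsr : (s.+1 <= r)%N by [].
  rewrite /U big_ord_recl big_ord0 addr0 genbin0 /= expr0 mulr1 polyC1 mul1r muln0 add0n.
  rewrite !Fib_small; try lia.
  by rewrite -exprD; congr ('X^_); lia.
have -> : (s.+1 : int) = (s : int) + 1 by rewrite intS addrC.
rewrite U_pascal addrK !IH; try lia.
rewrite (Fib_rec k (k * m.+1 + r - s)%N) //; last by rewrite mulnS; lia.
have -> : ((k * m.+1 + r - s).-1 = k * m.+1 + r - s.+1)%N by lia.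
have -> : ((k * m.+1 + r - s) - k = k * m + r - s)%N by rewrite mulnS; lia.
by rewrite exprS; ring.
Qed.

Definition S (a : int) (n : nat) : {poly int} :=
  \sum_(j < n) ((-1) ^+ (n - 1 - j)%N * genbin a (n - 1 - j)%N)%:P
     * ('X^k * Fib k (k * j + r)%N).

Lemma Srec a n : S a n.+1 =
  \sum_(j < n) ((-1) ^+ (n - 1 - j).+1 * genbin a (n - 1 - j).+1)%:P
     * ('X^k * Fib k (k * j + r)%N) + 'X^k * Fib k (k * n + r)%N.
Proof.
rewrite /S big_ord_recr /=.
have -> : (n.+1 - 1 - n = 0)%N by lia.
rewrite genbin0 expr0 mulr1 polyC1 mul1r; congr (_ + _).
apply: eq_bigr => i _.
by have -> : (n.+1 - 1 - i = (n - 1 - i).+1)%N by have := ltn_ord i; lia.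
Qed.

Lemma S_pascal a n : S a n.+1 = S (a - 1) n.+1 - S (a - 1) n.
Proof.
rewrite !Srec.
rewrite (eq_bigr (fun i : 'I_n =>
   ((-1) ^+ (n - 1 - i).+1 * genbin (a-1) (n - 1 - i).+1)%:P * ('X^k * Fib k (k * i + r))
   - ((-1) ^+ (n - 1 - i) * genbin (a-1) (n - 1 - i))%:P * ('X^k * Fib k (k * i + r)))).
  by rewrite sumrB /S; ring.
move=> i _.
rewrite genbinS exprS !polyCM polyCD polyCN polyC1.
ring.
Qed.

Lemma S1 a : S a 1 = 'X^(k + r).
Proof.
by rewrite /S big_ord_recr big_ord0 /= add0r genbin0 expr0 mulr1 polyC1 mul1r
  muln0 add0n Fib_small // exprD.
Qed.

Lemma part2 n : (1 <= n)%N -> forall i, (0 < i)%N -> (i < k + n)%N ->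
  S (i%:Z - k%:Z + r%:Z) n = 'X^(r + i) * Fib k (k * n - i)%N.
Proof.
elim: n => [//|n IH] _.
case: n IH => [|m] IH.
  move=> i hi hik; rewrite S1 Fib_small; last by lia.
  by rewrite -exprD; congr ('X^_); lia.
set N := m.+2.
have IHm : forall i, (0 < i)%N -> (i < k + m.+1)%N ->
  S (i%:Z - k%:Z + r%:Z) m.+1 = 'X^(r + i) * Fib k (k * m.+1 - i)%N by apply: IH.
have km : (m <= k * m)%N by rewrite leq_pmull.
pose i0 := (k - r)%N.
have base : S (i0%:Z - k%:Z + r%:Z) N = 'X^(r + i0) * Fib k (k * N - i0)%N.
  have -> : (i0%:Z - k%:Z + r%:Z) = 0 by rewrite /i0; lia.
  rewrite /S big_ord_recr /= big1 ?add0r.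
    have -> : (N - 1 - m.+1 = 0)%N by lia.
    rewrite genbin0 expr0 mulr1 polyC1 mul1r.
    congr (_ * _); first by congr ('X^_); rewrite /i0; lia.
    by congr (Fib k _); rewrite /N /i0 !mulnS; lia.
  move=> j _.
  have -> : (N - 1 - j = (m - j).+1)%N by have := ltn_ord j; rewrite /N; lia.
  by rewrite genbin0S mulr0 polyC0 mul0r.
have up : forall d, (i0 + d < k + N)%N ->
   S ((i0 + d)%N%:Z - k%:Z + r%:Z) N = 'X^(r + (i0 + d)) * Fib k (k * N - (i0 + d))%N.
  elim=> [|d IHd] hd; first by rewrite addn0.
  have -> : ((i0 + d.+1)%N%:Z - k%:Z + r%:Z) = ((i0 + d)%N%:Z - k%:Z + r%:Z) + 1 by lia.
  rewrite S_pascal addrK IHd; last by lia.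
  rewrite IHm; try lia.
  rewrite (Fib_rec k (k * N - (i0 + d))%N) //; last by rewrite /N !mulnS; lia.
  have -> : ((k * N - (i0 + d)).-1 = k * N - (i0 + d.+1))%N by rewrite /N !mulnS; lia.
  have -> : ((k * N - (i0 + d)) - k = k * m.+1 - (i0 + d))%N by rewrite /N !mulnS; lia.
  have -> : (r + (i0 + d.+1) = (r + (i0 + d)).+1)%N by lia.
  by rewrite exprS; ring.
have down : forall d, (d < i0)%N ->
   S ((i0 - d)%N%:Z - k%:Z + r%:Z) N = 'X^(r + (i0 - d)) * Fib k (k * N - (i0 - d))%N.
  elim=> [|d IHd] hd; first by rewrite subn0.
  have E := S_pascal ((i0 - d)%N%:Z - k%:Z + r%:Z) m.+1.
  rewrite (_ : ((i0 - d)%N%:Z - k%:Z + r%:Z - 1) = ((i0 - d.+1)%N%:Z - k%:Z + r%:Z)) in E; last by lia.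
  have -> : S ((i0 - d.+1)%N%:Z - k%:Z + r%:Z) N =
     S ((i0 - d)%N%:Z - k%:Z + r%:Z) N + S ((i0 - d.+1)%N%:Z - k%:Z + r%:Z) m.+1.
    by rewrite /N E; ring.
  rewrite IHd; last by lia.
  rewrite IHm; try lia.
  rewrite (Fib_rec k (k * N - (i0 - d.+1))%N) //; last by rewrite /N !mulnS; lia.
  have -> : ((k * N - (i0 - d.+1)).-1 = k * N - (i0 - d))%N by rewrite /N !mulnS; lia.
  have -> : ((k * N - (i0 - d.+1)) - k = k * m.+1 - (i0 - d.+1))%N by rewrite /N !mulnS; lia.
  have -> : (r + (i0 - d) = (r + (i0 - d.+1)).+1)%N by lia.
  by rewrite exprS; ring.
move=> i hi hik.
case: (leqP i0 i) => hi0.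
  have := up (i - i0)%N; rewrite subnKC //; apply; lia.
have := down (i0 - i)%N; rewrite subKn; [apply; lia | lia].
Qed.

End Main.

Theorem lemma10 (k r : nat) (hk : (1 <= k)%N) (hr : (r < k)%N) :
  forall n : nat, (1 <= n)%N ->
    (\sum_(0 <= j < n.+1)
        ((-1) ^+ j * genbin (r.+1)%:Z j)%:P * Fib k (k * (n - j) + r)%N
      = 'X^(r.+1) * Fib k (k * n - 1)%N)
    /\
    (forall i : nat, (0 < i)%N -> (i < k + n)%N ->
      \sum_(0 <= j < n)
        ((-1) ^+ (n - 1 - j)%N * genbin (i%:Z - k%:Z + r%:Z) (n - 1 - j)%N)%:P
          * ('X^k * Fib k (k * j + r)%N)
      = 'X^(r + i)%N * Fib k (k * n - i)%N).
Proof.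
move=> n hn; split.
  rewrite big_mkord.
  have := @part1 k r hk hr r.+1 (leqnn r.+1) n; rewrite hn => /(_ isT).
  rewrite /U => ->; congr (_ * Fib k _); lia.
move=> i hi hik; rewrite big_mkord.
have := @part2 k r hk hr n hn i hi hik; rewrite /S => ->. by congr (_ * _).
Qed.
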